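(* Let $N\ge2$, $\sigma^*\in\mathbb{R}^d_{>0}$ with $\sigma_1^*=\max_k\sigma_k^*$, and consider the recursion $$\sigma_i(t+1)=\sigma_i(t)\Big(1+\frac{\eta}{N}\sigma_i(t)^{1-\frac2N}(\sigma_i^*-\sigma_i(t))\Big)^N,$$ with $0\le\sigma_i(0)<\sigma_i^*$. If $\eta\le(1/\sigma_1^* )^{2-\frac2N}$, then $\sigma_i(t)\le\sigma_i^*$ for all $t\ge0$.
   Context: This recursion is gradient descent with learning rate $\eta$ on $\ell_N(w)=\frac{1}{2N^2}\|w^N-\sigma^*\|^2$ over nonnegative weights $w$, written in terms of $\sigma_i=w_i^N$. *)

(* Defs.v *)
From mathcomp Require Import all_boot all_order all_algebra.
From mathcomp Require Import all_classical all_reals all_analysis.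
Set Implicit Arguments. Unset Strict Implicit. Unset Printing Implicit Defensive.
Import Order.TTheory GRing.Theory Num.Theory.
Local Open Scope ring_scope.

Definition gd_step (R : realType) (N : nat) (eta s_star s : R) : R :=
  s * (1 + eta / N%:R * (s `^ (1 - 2 / N%:R)) * (s_star - s)) ^+ N.

(* Main.v *)
Require Import Defs.
From mathcomp Require Import all_boot all_order all_algebra.
From mathcomp Require Import all_classical all_reals all_analysis.
From mathcomp.algebra_tactics Require Import ring lra.
Import Order.TTheory GRing.Theory Num.Theory.
Local Open Scope ring_scope.

Lemma bern (R : realType) (h : R) (n : nat) : -1 <= h -> 1 + n%:R * h <= (1 + h) ^+ n.
Proof.
move=> hh; elim: n => [|n IH]; first by rewrite mul0r addr0 expr0.
rewrite exprS -natr1.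
have h1 : 0 <= 1 + h by lra.
have := ler_wpM2l h1 IH.
have : 0 <= n%:R * h * h :> R.
  by rewrite -mulrA mulr_ge0 // -expr2 sqr_ge0.
nra.
Qed.

Lemma keyalg (R : realType) (n : nat) (a s : R) : (0 < n)%N -> 0 < a -> 0 <= s <= a ->
  s * (1 + (a - s) / (n%:R * a)) ^+ n <= a.
Proof.
move=> n0 a0 /andP[s0 sa].
have nR : 0 < n%:R :> R by rewrite ltr0n.
set D := n%:R * a + a - s.
have D0 : 0 < D by rewrite /D; nra.
set z := n%:R * a / D.
have z0 : 0 < z by rewrite /z divr_gt0 // mulr_gt0.
have yz : 1 + (a - s) / (n%:R * a) = z^-1.
  rewrite /z invf_div /D; field; apply/andP; split; rewrite ?gt_eqF //; nra.
rewrite yz exprVn.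
have zn : 0 < z ^+ n by rewrite exprn_gt0.
rewrite ler_pdivrMr //.
have hb := @bern R (z - 1) n.
have := hb ltac:(lra); rewrite addrCA subrr addr0 => hz.
apply: le_trans (ler_wpM2l (ltW a0) hz).
have E : a * (1 + n%:R * (z - 1)) - s = (a - s)^+2 / D.
  rewrite /z /D; field; rewrite gt_eqF //.
rewrite -subr_ge0 E divr_ge0 ?sqr_ge0 //; exact: ltW.
Qed.

Lemma step (R : realType) (N : nat) (eta a a1 s : R) : (2 <= N)%N -> 0 < a -> a <= a1 ->
  0 < eta -> eta <= (1 / a1) `^ (2 - 2 / N%:R) -> 0 <= s <= a ->
  0 <= gd_step N eta a s <= a.
Proof.
move=> N2 a0 aa1 e0 he /andP[s0 sa].
have a10 : 0 < a1 by lra.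
have NR : 2 <= N%:R :> R by rewrite (ler_nat R 2 N).
have NR0 : 0 < N%:R :> R by lra.
pose p : R := 1 - 2 / N%:R.
have p0 : 0 <= p.
  rewrite /p subr_ge0 ler_pdivrMr //; lra.
have ep : 2 - 2 / N%:R = 1 + p by rewrite /p; ring.
rewrite ep powRD in he; last by apply/implyP => _; rewrite div1r invr_eq0 gt_eqF.
rewrite powRr1 in he; last by rewrite div1r invr_ge0 ltW.
have sp : s `^ p <= a1 `^ p by apply: ge0_ler_powR => //; rewrite ?nnegrE; lra.
have q1 : eta * s `^ p <= a^-1.
  have h1 := ler_wpM2r (powR_ge0 s p) he. move: h1 => /= h1. apply: (le_trans h1).
  have h2 : 1 / a1 * (1 / a1) `^ p * s `^ p <= 1 / a1 * (1 / a1) `^ p * a1 `^ p.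
    apply: ler_wpM2l sp.
    by rewrite mulr_ge0 ?powR_ge0 // div1r invr_ge0 ltW.
  apply: (le_trans h2).
  rewrite -mulrA -powRM; last 2 first.
  - by rewrite div1r invr_ge0 ltW.
  - exact: ltW.
  rewrite div1r mulVf ?gt_eqF // powR1 mulr1.
  by rewrite lef_pV2 // posrE.
have q0 : 0 <= eta * s `^ p by rewrite mulr_ge0 ?powR_ge0 // ltW.
pose u : R := eta / N%:R * s `^ p * (a - s).
have uE : u = (eta * s `^ p) * ((a - s) / N%:R) by rewrite /u; field; rewrite gt_eqF.
have vE : (a - s) / (N%:R * a) = a^-1 * ((a - s) / N%:R).
  by field; apply/andP; split; rewrite gt_eqF.
have w0 : 0 <= (a - s) / N%:R by rewrite divr_ge0 //; lra.
have u0 : 0 <= u by rewrite uE mulr_ge0.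
have uv : u <= (a - s) / (N%:R * a) by rewrite uE vE ler_wpM2r.
rewrite /gd_step -/p -/u; apply/andP; split.
  by rewrite mulr_ge0 // exprn_ge0 //; lra.
have K := @keyalg R N a s (ltnW N2) a0 ltac:(by rewrite s0 sa).
apply: le_trans K.
apply: ler_wpM2l => //; apply: lerXn2r; rewrite ?nnegrE; lra.
Qed.

Theorem lemma1 (R : realType) (N d : nat) (sstar : 'I_d -> R) (i1 : 'I_d)
    (eta : R) (sigma : nat -> 'I_d -> R) :
  (2 <= N)%N ->
  (forall k, 0 < sstar k) ->
  (forall k, sstar k <= sstar i1) ->
  0 < eta ->
  (forall i t, sigma t.+1 i = gd_step N eta (sstar i) (sigma t i)) ->
  (forall i, 0 <= sigma 0%N i < sstar i) ->
  eta <= (1 / sstar i1) `^ (2 - 2 / N%:R) ->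
  forall t i, sigma t i <= sstar i.
Proof.
move=> N2 hpos hmax e0 hrec h0 he t i.
suff H : 0 <= sigma t i <= sstar i by case/andP: H.
elim: t => [|t IH].
  by case/andP: (h0 i) => -> /ltW ->.
rewrite hrec; exact: step N2 (hpos i) (hmax i) e0 he IH.
Qed.
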